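(* The group $G$ has exactly three orbits on the points of $\Pi$, namely $\{N\}$, $\mathcal Q$, and $\Pi\setminus(\mathcal Q\cup\{N\})$.
   Context: Let $q$ be an even prime power and $\mathrm{PG}(5,q^2)$ have homogeneous coordinates $(X_1,\dots,X_6)$, points written as column vectors. Let $\Sigma$ be the set of points having a coordinate vector $(\alpha,\alpha^q,\delta_0,\beta,\beta^q,\delta_1)$ with $\alpha,\beta\in\mathbb F_{q^2}$, $\delta_0,\delta_1\in\mathbb F_q$ (a Baer subgeometry $\cong\mathrm{PG}(5,q)$). Let $\Pi=\Sigma\cap\{X_6=0\}$, $\mathcal Q=\Sigma\cap\{X_6=0,\ X_3^2+X_1X_5+X_2X_4=0\}$ (a parabolic quadric $\mathcal Q(4,q)$ of $\Pi$) with nucleus $N=(0,0,1,0,0,0)$. Fix $\omega\in\mathbb F_{q^2}\setminus\mathbb F_q$ with $\omega+\omega^q=1$. For $a,b,c,d\in\mathbb F_{q^2}$ with $ad+bc=1$ let $M_{a,b,c,d}$ be the $6\times6$ matrix with rows $(a^2,0,0,0,c^2,\tfrac{c(a+c\omega^q)}{\omega})$, $(0,a^{2q},0,c^{2q},0,\tfrac{c^q(a^q+c^q\omega)}{\omega^q})$, $(ab,a^qb^q,1,c^qd^q,cd,\tfrac{d(a+c\omega^q)}{\omega}+\tfrac{d^q(a^q+c^q\omega)}{\omega^q}+\tfrac{1}{\omega^{q+1}})$, $(0,b^{2q},0,d^{2q},0,\tfrac{d^q(b^q+d^q\omega)+\omega}{\omega^q})$, $(b^2,0,0,0,d^2,\tfrac{d(b+d\omega^q)+\omega^q}{\omega})$,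 $(0,0,0,0,0,1)$, and let $G\cong\mathrm{PSL}(2,q^2)$ be the group of projectivities $X\mapsto M_{a,b,c,d}X$; $G$ stabilizes $\Sigma$, $\Pi$, $\mathcal Q$ and $N$. *)

(* Defs.v *)
From HB Require Import structures.
From mathcomp Require Import all_boot all_order all_algebra all_field.
Set Implicit Arguments. Unset Strict Implicit. Unset Printing Implicit Defensive.
Import GRing.Theory.
Local Open Scope ring_scope.

Section Defs.
Variables (F : finFieldType) (q : nat) (w : F).

(* Coordinate vectors of PG(5,q^2): column vectors of length 6;
   coordinate X_{k+1} is x (k : 'I_6) 0. *)
Definition vec6 (l : seq F) : 'cV[F]_6 := \col_(i < 6) nth 0 l i.

Definition peq (x y : 'cV[F]_6) : Prop := exists k : F, k != 0 /\ y = k *: x.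

Definition inFq (d : F) : Prop := d ^+ q = d.

Definition inSigma (x : 'cV[F]_6) : Prop :=
  x != 0 /\ exists a b d0 d1 : F, inFq d0 /\ inFq d1 /\
    peq x (vec6 [:: a; a ^+ q; d0; b; b ^+ q; d1]).

Definition inPi (x : 'cV[F]_6) : Prop := inSigma x /\ x 5%:R 0 = 0.

Definition inQ (x : 'cV[F]_6) : Prop :=
  inPi x /\ (x 2%:R 0) ^+ 2 + x 0 0 * x 4%:R 0 + x 1 0 * x 3%:R 0 = 0.

Definition Npt : 'cV[F]_6 := vec6 [:: 0; 0; 1; 0; 0; 0].

Definition wq := w ^+ q.

Definition Mabcd (a b c d : F) : 'M[F]_6 :=
  \matrix_(i < 6, j < 6) nth 0 (nth [::] [::
    [:: a ^+ 2; 0; 0; 0; c ^+ 2; c * (a + c * wq) / w];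
    [:: 0; a ^+ (2 * q); 0; c ^+ (2 * q); 0; c ^+ q * (a ^+ q + c ^+ q * w) / wq];
    [:: a * b; a ^+ q * b ^+ q; 1; c ^+ q * d ^+ q; c * d;
        d * (a + c * wq) / w + d ^+ q * (a ^+ q + c ^+ q * w) / wq + 1 / w ^+ q.+1];
    [:: 0; b ^+ (2 * q); 0; d ^+ (2 * q); 0; (d ^+ q * (b ^+ q + d ^+ q * w) + w) / wq];
    [:: b ^+ 2; 0; 0; 0; d ^+ 2; (d * (b + d * wq) + wq) / w];
    [:: 0; 0; 0; 0; 0; 1]] i) j.

Definition Grel (x y : 'cV[F]_6) : Prop :=
  exists a b c d : F, a * d + b * c = 1 /\ peq (Mabcd a b c d *m x) y.

Definition setN (y : 'cV[F]_6) : Prop := peq Npt y.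
Definition setQ (y : 'cV[F]_6) : Prop := inQ y.
Definition setRest (y : 'cV[F]_6) : Prop := inPi y /\ ~ inQ y /\ ~ peq Npt y.

End Defs.

(* Main.v *)
Require Import Defs.
From HB Require Import structures.
From mathcomp Require Import all_boot all_order all_algebra all_field.
From mathcomp Require Import ring.
From Stdlib Require Import Classical.
Import GRing.Theory.
Local Open Scope ring_scope.

Section Work.
Variables (F : finFieldType) (q : nat).
Hypothesis h2 : 2 = 0 :> F.
Hypothesis hq : (0 < q)%N.
Hypothesis hD : forall x y : F, (x + y) ^+ q = x ^+ q + y ^+ q.
Hypothesis hK : forall x : F, (x ^+ q) ^+ q = x.
Hypothesis hsq : forall x : F, exists y, y ^+ 2 = x.

Definition phi (x : F) := x ^+ q.
Lemma phiE x : x ^+ q = phi x. Proof. by []. Qed.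
Lemma phiD x y : phi (x + y) = phi x + phi y. Proof. exact: hD. Qed.
Lemma phiM x y : phi (x * y) = phi x * phi y. Proof. exact: exprMn. Qed.
Lemma phiX x n : phi (x ^+ n) = phi x ^+ n. Proof. by rewrite /phi -!exprM mulnC. Qed.
Lemma phiK x : phi (phi x) = x. Proof. exact: hK. Qed.
Lemma phi0 : phi 0 = 0. Proof. by rewrite /phi expr0n eqn0Ngt hq. Qed.
Lemma phi1 : phi 1 = 1. Proof. exact: expr1n. Qed.
Lemma phiV x : phi (x^-1) = (phi x)^-1. Proof. exact: exprVn. Qed.
Lemma phi_inj : injective phi. Proof. exact: can_inj phiK. Qed.
Lemma phi_eq0 x : (phi x == 0) = (x == 0). Proof. by rewrite -{1}phi0 (inj_eq phi_inj). Qed.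
Global Opaque phi.

Lemma addxx (x : F) : x + x = 0. Proof. by rewrite -mulr2n -mulr_natl h2 mul0r. Qed.
Lemma oppx (x : F) : - x = x. Proof. by rewrite -[LHS]add0r -(addxx x) addrK. Qed.
Lemma sq_inj (x y : F) : x ^+ 2 = y ^+ 2 -> x = y.
Proof.
move=> e; have e2 : (x+y)^+2 = x^+2 + y^+2.
  ring: h2.
have : (x + y) ^+ 2 = 0 by rewrite e2 e addxx.
move/eqP; rewrite expf_eq0 /= addr_eq0 oppx => /eqP //.
Qed.

Definition T (x : F) := x + phi x.
Lemma phiT x : phi (T x) = T x. Proof. by rewrite /T phiD phiK addrC. Qed.

Definition actA (a b c d al de be : F) := a^+2 * al + c^+2 * phi be.
Definition actD (a b c d al de be : F) := de + T (a*b*al) + T (c*d*phi be).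
Definition actB (a b c d al de be : F) := phi b ^+2 * phi al + phi d ^+2 * be.

Section Comp.
Variables (a b c d a' b' c' d' al de be : F).
Hypothesis hdet' : a' * d' = 1 + b' * c'.
Let a2 := a' * a + c' * b.
Let b2 := b' * a + d' * b.
Let c2 := a' * c + c' * d.
Let d2 := b' * c + d' * d.
Let A := actA a b c d al de be.
Let D := actD a b c d al de be.
Let B := actB a b c d al de be.

Lemma compA : actA a' b' c' d' A D B = actA a2 b2 c2 d2 al de be.
Proof. rewrite /A /D /B /actA /actB /actD /T /a2 /b2 /c2 /d2.
rewrite !(phiD, phiM, phiX, phiK). ring: h2 hdet'. Qed.
Lemma compB : actB a' b' c' d' A D B = actB a2 b2 c2 d2 al de be.
Proof. rewrite /A /D /B /actA /actB /actD /T /a2 /b2 /c2 /d2.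
rewrite !(phiD, phiM, phiX, phiK). ring: h2 hdet'. Qed.
Lemma compD : actD a' b' c' d' A D B = actD a2 b2 c2 d2 al de be.
Proof. rewrite /A /D /B /actA /actB /actD /T /a2 /b2 /c2 /d2.
have hq' : phi a' * phi d' = 1 + phi b' * phi c' by rewrite -phiM hdet' phiD phiM phi1.
rewrite !(phiD, phiM, phiX, phiK). ring: h2 hdet' hq'. Qed.
End Comp.

Lemma actA_id al de be : actA 1 0 0 1 al de be = al.
Proof. rewrite /actA; ring. Qed.
Lemma actB_id al de be : actB 1 0 0 1 al de be = be.
Proof. rewrite /actB phi0 phi1; ring. Qed.
Lemma actD_id al de be : actD 1 0 0 1 al de be = de.
Proof. rewrite /actD /T !(mulr0, mul0r, mul1r) phi0; ring. Qed.

Definition V (al de be : F) : 'cV[F]_6 := vec6 [:: al; phi al; de; be; phi be; 0].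

Lemma e2q (x : F) : x ^+ (2 * q) = phi x ^+ 2.
Proof. by rewrite mulnC exprM. Qed.

Lemma M_V (w a b c d al de be : F) :
  Mabcd q w a b c d *m V al de be =
  V (actA a b c d al de be) (actD a b c d al de be) (actB a b c d al de be).
Proof.
apply/matrixP => i j; rewrite ord1 !mxE /= !big_ord_recl big_ord0 /= !mxE /=.
case: i => [[|[|[|[|[|[|i]]]]]] Hi] //=; rewrite /= ?e2q ?phiE;
  rewrite /actA /actB /actD /T !(mulr0, mul0r, addr0, add0r);
  rewrite ?(phiD, phiM, phiX, phiK); ring: h2.
Qed.


Section Inv.
Variables (a b c d al de be : F).
Hypothesis hdet : a * d = 1 + b * c.
Let hdet2 : d * a = 1 + b * c. Proof. by rewrite mulrC. Qed.
Let e1 : d * a + c * b = 1. Proof. rewrite hdet2 mulrC -addrA addxx addr0 //. Qed.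
Let e2 : b * a + a * b = 0. Proof. by rewrite mulrC addxx. Qed.
Let e3 : d * c + c * d = 0. Proof. by rewrite mulrC addxx. Qed.
Let e4 : b * c + a * d = 1. Proof. by rewrite hdet addrCA addxx addr0. Qed.
Let A := actA a b c d al de be.
Let D := actD a b c d al de be.
Let B := actB a b c d al de be.
Lemma invA : actA d b c a A D B = al.
Proof. by rewrite /A /D /B compA // e1 e2 e3 e4 actA_id. Qed.
Lemma invB : actB d b c a A D B = be.
Proof. by rewrite /A /D /B compB // e1 e2 e3 e4 actB_id. Qed.
Lemma invD : actD d b c a A D B = de.
Proof. by rewrite /A /D /B compD // e1 e2 e3 e4 actD_id. Qed.
End Inv.

Section Scale.
Variables (a b c d l al de be : F).
Hypothesis hl : phi l = l.
Lemma scA : actA a b c d (l * al) (l * de) (l * be) = l * actA a b c d al de be.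
Proof. rewrite /actA !phiM hl; ring. Qed.
Lemma scB : actB a b c d (l * al) (l * de) (l * be) = l * actB a b c d al de be.
Proof. rewrite /actB !phiM hl; ring. Qed.
Lemma scD : actD a b c d (l * al) (l * de) (l * be) = l * actD a b c d al de be.
Proof. rewrite /actD /T !(phiM, phiK) hl; ring. Qed.
End Scale.

Definition Qf (al de be : F) := de ^+ 2 + al * phi be + phi al * be.

Lemma Qf_inv a b c d al de be : a * d = 1 + b * c ->
  Qf (actA a b c d al de be) (actD a b c d al de be) (actB a b c d al de be) = Qf al de be.
Proof.
move=> hdet.
have hq' : phi a * phi d = 1 + phi b * phi c by rewrite -phiM hdet phiD phiM phi1.
rewrite /Qf /actA /actB /actD /T !(phiD, phiM, phiX, phiK). ring: h2 hdet hq'.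
Qed.

Lemma actD_Fq a b c d al de be : phi de = de -> phi (actD a b c d al de be) = actD a b c d al de be.
Proof.
have phiDT x y : phi (x + T y) = phi x + T y by rewrite phiD phiT.
by move=> hde; rewrite /actD !phiDT hde. Qed.


Lemma reach al de be : phi de = de -> (al != 0) || (be != 0) ->
  exists eps, [/\ phi eps = eps, eps ^+ 2 = Qf al de be &
  forall u, phi u = u -> u != 0 -> exists a b c d, (a * d = 1 + b * c) /\
    [/\ actA a b c d 1 (u ^+ 2 * eps) 0 = u ^+ 2 * al,
        actD a b c d 1 (u ^+ 2 * eps) 0 = u ^+ 2 * de &
        actB a b c d 1 (u ^+ 2 * eps) 0 = u ^+ 2 * be]].
Proof.
move=> hde hn; have [sa hsa] := hsq al; have [sb hsb] := hsq be.
exists (de + T (sa * phi sb)); split.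
- by rewrite phiD phiT hde.
- subst al be; rewrite /Qf /T !(phiD, phiM, phiX, phiK); ring: h2.
move=> u hu u0.
have key : forall c d,
    [/\ actA (sa * u) (phi sb * u) c d 1 (u ^+ 2 * (de + T (sa * phi sb))) 0 = u ^+ 2 * al,
        actD (sa * u) (phi sb * u) c d 1 (u ^+ 2 * (de + T (sa * phi sb))) 0 = u ^+ 2 * de &
        actB (sa * u) (phi sb * u) c d 1 (u ^+ 2 * (de + T (sa * phi sb))) 0 = u ^+ 2 * be].
  move=> c d; subst al be; rewrite /actA /actB /actD /T phi0 !mulr0 phi0.
  by split; rewrite ?(phiD, phiM, phiX, phiK, phi0, phi1) ?hu; ring: h2.
have [sa0|sa0] := eqVneq sa 0.
- have sb0 : sb != 0.
    apply: contraTneq hn => sb0; subst al be sa sb.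
    by rewrite !expr0n /= eqxx.
  have b0 : phi sb * u != 0 by rewrite mulf_neq0 ?phi_eq0.
  exists (sa * u), (phi sb * u), (phi sb * u)^-1, 0; split; last exact: key.
  by rewrite sa0 mul0r mulr0 mulfV // addxx.
- have a0 : sa * u != 0 by rewrite mulf_neq0.
  exists (sa * u), (phi sb * u), 0, (sa * u)^-1; split; last exact: key.
  by rewrite mulfV // mulr0 addr0.
Qed.


Lemma Ve0 al de be : V al de be 0 0 = al. Proof. by rewrite mxE. Qed.
Lemma Ve1 al de be : V al de be 1 0 = phi al. Proof. by rewrite mxE. Qed.
Lemma Ve2 al de be : V al de be 2%:R 0 = de. Proof. by rewrite mxE. Qed.
Lemma Ve3 al de be : V al de be 3%:R 0 = be. Proof. by rewrite mxE. Qed.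
Lemma Ve4 al de be : V al de be 4%:R 0 = phi be. Proof. by rewrite mxE. Qed.
Lemma Ve5 al de be : V al de be 5%:R 0 = 0. Proof. by rewrite mxE. Qed.

Lemma scE (k : F) (m : 'cV[F]_6) i j : (k *: m) i j = k * m i j. Proof. by rewrite mxE. Qed.

Lemma V0 : V 0 0 0 = 0.
Proof.
apply/matrixP => i j; rewrite !mxE.
by case: i => [[|[|[|[|[|[|i]]]]]] Hi] //=; rewrite phi0.
Qed.

Lemma V_eq0 al de be : V al de be = 0 -> [/\ al = 0, de = 0 & be = 0].
Proof.
move=> e; split.
- by rewrite -(Ve0 al de be) e mxE.
- by rewrite -(Ve2 al de be) e mxE.
- by rewrite -(Ve3 al de be) e mxE.
Qed.

Lemma V_scale l al de be : phi l = l -> V (l * al) (l * de) (l * be) = l *: V al de be.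
Proof.
move=> hl; apply/matrixP => i j; rewrite !mxE.
by case: i => [[|[|[|[|[|[|i]]]]]] Hi] //=; rewrite ?phiM ?hl ?mulr0.
Qed.

Lemma Npt_V : Npt F = V 0 1 0.
Proof.
apply/matrixP => i j; rewrite !mxE.
by case: i => [[|[|[|[|[|[|i]]]]]] Hi] //=; rewrite phi0.
Qed.

Definition good (al de be : F) := phi de = de /\ ~ [/\ al = 0, de = 0 & be = 0].

Lemma inPi_V (x : 'cV[F]_6) : inPi q x <->
  exists k al de be, [/\ k != 0, good al de be & x = k *: V al de be].
Proof.
split.
- move=> [[xnz [a [b [d0 [d1 [h0 [h1 [k [kn e]]]]]]]]] x5].
  have d10 : d1 = 0.
    have := congr1 (fun m : 'cV[F]_6 => m 5%:R 0) e.
    by rewrite /= scE x5 mulr0 mxE.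
  subst d1.
  have eV : V a d0 b = k *: x by rewrite -e.
  exists k^-1, a, d0, b; split; first by rewrite invr_eq0.
  + split; first exact: h0.
    case=> a0 d00 b0; move: eV; rewrite a0 d00 b0 V0 => /esym /eqP.
    by rewrite scaler_eq0 (negbTE kn) (negbTE xnz).
  + by rewrite eV scalerA mulVf // scale1r.
- move=> [k [al [de [be [kn [hde hnz] ->]]]]]; split; last first.
    by rewrite scE Ve5 mulr0.
  split.
    rewrite scaler_eq0 (negbTE kn) /=; apply/eqP => /V_eq0 H; exact: hnz.
  exists al, be, de, 0; split; first exact: hde.
  split; first by rewrite /inFq expr0n eqn0Ngt hq.
  exists k^-1; split; first by rewrite invr_eq0.
  by rewrite scalerA mulVf // scale1r.
Qed.

Lemma inQ_V k al de be : k != 0 -> good al de be ->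
  (inQ q (k *: V al de be) <-> Qf al de be = 0).
Proof.
move=> kn g.
have hPi : inPi q (k *: V al de be) by apply/inPi_V; exists k, al, de, be.
rewrite /inQ !scE Ve0 Ve1 Ve2 Ve3 Ve4.
have -> : (k * de) ^+ 2 + k * al * (k * phi be) + k * phi al * (k * be) = k ^+ 2 * Qf al de be.
  by rewrite /Qf; ring.
split; first by case=> _ /eqP; rewrite mulf_eq0 expf_eq0 (negbTE kn) andbF /= => /eqP.
by move=> ->; rewrite mulr0.
Qed.

Lemma N_V k al de be : k != 0 -> good al de be ->
  (peq (Npt F) (k *: V al de be) <-> al = 0 /\ be = 0).
Proof.
move=> kn [hde hnz]; split.
- move=> [k' [_ e]].
  have e0 := congr1 (fun m : 'cV[F]_6 => m 0 0) e.
  have e3 := congr1 (fun m : 'cV[F]_6 => m 3%:R 0) e.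
  move: e0 e3; rewrite /= !scE Npt_V !Ve0 !Ve3 !mulr0.
  by move=> /eqP; rewrite mulf_eq0 (negbTE kn) => /eqP -> /eqP; rewrite mulf_eq0 (negbTE kn) => /eqP ->.
- move=> [a0 b0]; subst al be.
  have dn : de != 0 by apply/eqP => d0; apply: hnz.
  exists (k * de); split; first by rewrite mulf_neq0.
  by rewrite Npt_V -scalerA -[de *: _]V_scale // mulr0 mulr1.
Qed.


Lemma det_conv (a b c d : F) : (a * d + b * c = 1) <-> (a * d = 1 + b * c).
Proof.
split=> [<-|->]; first by rewrite -addrA addxx addr0.
by rewrite -addrA addxx addr0.
Qed.

Lemma Grel_V w k al de be (y : 'cV[F]_6) : k != 0 ->
  (Grel q w (k *: V al de be) y <-> exists a b c d, (a * d = 1 + b * c) /\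
     exists k', k' != 0 /\
       y = k' *: V (actA a b c d al de be) (actD a b c d al de be) (actB a b c d al de be)).
Proof.
move=> kn; split.
- move=> [a [b [c [d [hdet [k' [k'n ey]]]]]]].
  exists a, b, c, d; split; first exact/det_conv.
  exists (k' * k); split; first by rewrite mulf_neq0.
  by rewrite ey -scalemxAr M_V scalerA.
- move=> [a [b [c [d [hdet [k' [k'n ey]]]]]]].
  exists a, b, c, d; split; first exact/det_conv.
  exists (k' / k); split; first by rewrite mulf_neq0 ?invr_eq0.
  by rewrite ey -scalemxAr M_V scalerA mulfVK.
Qed.


Lemma act0 a b c d : [/\ actA a b c d 0 0 0 = 0, actD a b c d 0 0 0 = 0 & actB a b c d 0 0 0 = 0].
Proof. by rewrite /actA /actB /actD /T phi0 !mulr0 phi0 !addr0. Qed.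

Lemma transport a1 b1 c1 d1 a2 b2 c2 d2 l1 l2 x0 y0 z0 al1 de1 be1 al2 de2 be2 :
  a1 * d1 = 1 + b1 * c1 -> a2 * d2 = 1 + b2 * c2 ->
  phi l1 = l1 -> l1 != 0 ->
  actA a1 b1 c1 d1 x0 y0 z0 = l1 * al1 ->
  actD a1 b1 c1 d1 x0 y0 z0 = l1 * de1 ->
  actB a1 b1 c1 d1 x0 y0 z0 = l1 * be1 ->
  actA a2 b2 c2 d2 x0 y0 z0 = l2 * al2 ->
  actD a2 b2 c2 d2 x0 y0 z0 = l2 * de2 ->
  actB a2 b2 c2 d2 x0 y0 z0 = l2 * be2 ->
  exists a b c d, (a * d = 1 + b * c) /\
    [/\ actA a b c d al1 de1 be1 = (l2 / l1) * al2,
        actD a b c d al1 de1 be1 = (l2 / l1) * de2 &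
        actB a b c d al1 de1 be1 = (l2 / l1) * be2].
Proof.
move=> hd1 hd2 hl1 l1n eA1 eD1 eB1 eA2 eD2 eB2.
set m := l1^-1.
have hm : phi m = m by rewrite /m phiV hl1.
have f1 : al1 = actA a1 b1 c1 d1 (m * x0) (m * y0) (m * z0) by rewrite scA // eA1 mulKf.
have f2 : de1 = actD a1 b1 c1 d1 (m * x0) (m * y0) (m * z0) by rewrite scD // eD1 mulKf.
have f3 : be1 = actB a1 b1 c1 d1 (m * x0) (m * y0) (m * z0) by rewrite scB // eB1 mulKf.
have hdi : d1 * a1 = 1 + b1 * c1 by rewrite mulrC.
exists (a2 * d1 + c2 * b1), (b2 * d1 + d2 * b1), (a2 * c1 + c2 * a1), (b2 * c1 + d2 * a1).
split; first by ring: h2 hd1 hd2.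
rewrite f1 f2 f3.
rewrite -(compA d1 b1 c1 a1 a2 b2 c2 d2) // -(compD d1 b1 c1 a1 a2 b2 c2 d2) //
  -(compB d1 b1 c1 a1 a2 b2 c2 d2) //.
rewrite invA // invD // invB //.
rewrite scA // scD // scB // eA2 eD2 eB2.
by split; rewrite /m mulrA [l1^-1 * l2]mulrC.
Qed.


Lemma goodQ al de be : good al de be -> Qf al de be = 0 -> ~ (al = 0 /\ be = 0).
Proof.
move=> [_ hnz] hQ [a0 b0]; apply: hnz; split => //.
move: hQ; rewrite /Qf a0 b0 phi0 ?mulr0 ?mul0r ?addr0 => /eqP.
by rewrite expf_eq0 /= => /eqP.
Qed.

Lemma actN a b c d de : [/\ actA a b c d 0 de 0 = 0, actD a b c d 0 de 0 = de & actB a b c d 0 de 0 = 0].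
Proof. by rewrite /actA /actB /actD /T phi0 !mulr0 phi0 !addr0. Qed.

Lemma good_act a b c d al de be : a * d = 1 + b * c -> good al de be ->
  good (actA a b c d al de be) (actD a b c d al de be) (actB a b c d al de be).
Proof.
move=> hdet [hde hnz]; split; first exact: actD_Fq.
move=> [eA eD eB]; apply: hnz.
have [z1 z2 z3] := act0 d b c a.
split; [rewrite -(invA a b c d al de be) // | rewrite -(invD a b c d al de be) // | rewrite -(invB a b c d al de be) //]; by rewrite eA eD eB.
Qed.

Lemma act_notN a b c d al de be : a * d = 1 + b * c ->
  actA a b c d al de be = 0 -> actB a b c d al de be = 0 -> al = 0 /\ be = 0.
Proof.
move=> hdet eA eB.
have [z1 _ z3] := actN d b c a (actD a b c d al de be).
split; [rewrite -(invA a b c d al de be) // | rewrite -(invB a b c d al de be) //]; by rewrite eA eB.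
Qed.

Lemma orbit_rev w k1 k2 a1 b1 c1 d1 a2 b2 c2 d2 l1 l2 x0 y0 z0 al1 de1 be1 al2 de2 be2 :
  k1 != 0 -> k2 != 0 ->
  a1 * d1 = 1 + b1 * c1 -> a2 * d2 = 1 + b2 * c2 ->
  phi l1 = l1 -> l1 != 0 -> phi l2 = l2 -> l2 != 0 ->
  actA a1 b1 c1 d1 x0 y0 z0 = l1 * al1 ->
  actD a1 b1 c1 d1 x0 y0 z0 = l1 * de1 ->
  actB a1 b1 c1 d1 x0 y0 z0 = l1 * be1 ->
  actA a2 b2 c2 d2 x0 y0 z0 = l2 * al2 ->
  actD a2 b2 c2 d2 x0 y0 z0 = l2 * de2 ->
  actB a2 b2 c2 d2 x0 y0 z0 = l2 * be2 ->
  Grel q w (k1 *: V al1 de1 be1) (k2 *: V al2 de2 be2).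
Proof.
move=> k1n k2n hd1 hd2 hl1 l1n hl2 l2n eA1 eD1 eB1 eA2 eD2 eB2.
have [a [b [c [d [hdet [eA eD eB]]]]]] :=
  transport _ _ _ _ _ _ _ _ _ _ _ _ _ _ _ _ _ _ _ hd1 hd2 hl1 l1n eA1 eD1 eB1 eA2 eD2 eB2.
apply/Grel_V => //; exists a, b, c, d; split => //.
have ln : l2 / l1 != 0 by rewrite mulf_neq0 ?invr_eq0.
exists (k2 / (l2 / l1)); split; first by rewrite mulf_neq0 ?invr_eq0.
rewrite eA eD eB V_scale; last by rewrite phiM phiV hl1 hl2.
by rewrite scalerA mulfVK.
Qed.

Lemma reachQ al de be : good al de be -> Qf al de be = 0 ->
  exists a b c d l, [/\ a * d = 1 + b * c, phi l = l, l != 0 &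
    [/\ actA a b c d 1 0 0 = l * al, actD a b c d 1 0 0 = l * de &
        actB a b c d 1 0 0 = l * be]].
Proof.
move=> g hQ; have hn := goodQ _ _ _ g hQ.
have hab : (al != 0) || (be != 0).
  have [a0|an] := eqVneq al 0; last by [].
  have [b0|bn] := eqVneq be 0; last by rewrite orbT.
  by case: hn.
have [eps [_ he H]] := reach _ _ _ g.1 hab.
have e0 : eps = 0 by move: he; rewrite hQ => /eqP; rewrite expf_eq0 /= => /eqP.
have [a [b [c [d [hdet [eA eD eB]]]]]] := H 1 phi1 (oner_neq0 _).
exists a, b, c, d, (1 ^+ 2); split => //; first by rewrite phiX phi1.
  by rewrite expr1n oner_neq0.
by move: eA eD eB; rewrite e0 mulr0.
Qed.

Lemma reachR al de be : good al de be -> Qf al de be != 0 -> ~ (al = 0 /\ be = 0) ->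
  exists a b c d l, [/\ a * d = 1 + b * c, phi l = l, l != 0 &
    [/\ actA a b c d 1 1 0 = l * al, actD a b c d 1 1 0 = l * de &
        actB a b c d 1 1 0 = l * be]].
Proof.
move=> g hQ hn.
have hab : (al != 0) || (be != 0).
  have [a0|an] := eqVneq al 0; last by [].
  have [b0|bn] := eqVneq be 0; last by rewrite orbT.
  by case: hn.
have [eps [heps he H]] := reach _ _ _ g.1 hab.
have en : eps != 0 by apply: contra hQ => /eqP e0; rewrite -he e0 expr0n.
have [u hu] := hsq eps^-1.
have un : u != 0 by apply: contra_neq (invr_neq0 en) => u0; rewrite -hu u0 expr0n.
have phu : phi u = u by apply: sq_inj; rewrite -phiX hu phiV heps.
have [a [b [c [d [hdet [eA eD eB]]]]]] := H u phu un.
exists a, b, c, d, (u ^+ 2); split => //; first by rewrite phiX phu.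
  by rewrite expf_neq0.
by move: eA eD eB; rewrite hu mulVf.
Qed.


Lemma main_sec w :
  (forall x : 'cV[F]_6, inPi q x ->
     [\/ setN x, setQ q x | setRest q x]
     /\ ~ (setN x /\ setQ q x) /\ ~ (setN x /\ setRest q x)
     /\ ~ (setQ q x /\ setRest q x)) /\
  inPi q (Npt F) /\ (exists x : 'cV[F]_6, setQ q x) /\ (exists x : 'cV[F]_6, setRest q x) /\
  (forall x y : 'cV[F]_6, setN x -> (Grel q w x y <-> setN y)) /\
  (forall x y : 'cV[F]_6, setQ q x -> (Grel q w x y <-> setQ q y)) /\
  (forall x y : 'cV[F]_6, setRest q x -> (Grel q w x y <-> setRest q y)).
Proof.
have g010 : good 0 1 0.
  by split; [exact: phi1 | case=> _ /eqP; rewrite oner_eq0].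
have g100 : good 1 0 0.
  by split; [exact: phi0 | case=> /eqP; rewrite oner_eq0].
have g110 : good 1 1 0.
  by split; [exact: phi1 | case=> /eqP; rewrite oner_eq0].
split.
  move=> x hx; have [k [al [de [be [kn g ex]]]]] := (inPi_V x).1 hx.
  split.
    case: (classic (setN x)) => hN; first by constructor 1.
    case: (classic (setQ q x)) => hQ; first by constructor 2.
    by constructor 3; split; [|split].
  split.
    move=> [hN hQ]; rewrite ex in hN hQ.
    exact: (goodQ _ _ _ g ((inQ_V _ _ _ _ kn g).1 hQ) ((N_V _ _ _ _ kn g).1 hN)).
  split.
    by move=> [hN [_ [_ hN']]].
  by move=> [hQ [_ [hQ' _]]].
split.
  apply/inPi_V; exists 1, 0, 1, 0; split => //; first exact: oner_neq0.
  by rewrite scale1r Npt_V.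
split.
  exists (1 *: V 1 0 0); apply/(inQ_V _ _ _ _ (oner_neq0 _) g100).
  by rewrite /Qf phi0 phi1; ring.
split.
  exists (1 *: V 1 1 0); split.
    by apply/inPi_V; exists 1, 1, 1, 0; split => //; exact: oner_neq0.
  split.
    move/(inQ_V _ _ _ _ (oner_neq0 _) g110) => /eqP.
    by rewrite /Qf phi0 phi1 expr1n ?mulr0 ?mulr1 ?addr0 oner_eq0.
  by move/(N_V _ _ _ _ (oner_neq0 _) g110) => [/eqP]; rewrite oner_eq0.
split.
  move=> x y [k [kn ex]]; rewrite ex Npt_V; split.
    move/(Grel_V _ _ _ _ _ _ kn) => [a [b [c [d [hdet [k' [k'n ->]]]]]]].
    have [z1 z2 z3] := actN a b c d 1; rewrite z1 z2 z3.
    by exists k'; split => //; rewrite Npt_V.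
  move=> [k' [k'n ->]]; apply/(Grel_V _ _ _ _ _ _ kn).
  exists 1, 0, 0, 1; split; first by rewrite mulr1 mulr0 addr0.
  by exists k'; split => //; rewrite actA_id actD_id actB_id Npt_V.
split.
  move=> x y hx.
  have [k [al [de [be [kn g ex]]]]] := (inPi_V x).1 hx.1.
  subst x; have hQ := (inQ_V _ _ _ _ kn g).1 hx.
  split.
    move/(Grel_V _ _ _ _ _ _ kn) => [a [b [c [d [hdet [k' [k'n ->]]]]]]].
    apply/(inQ_V _ _ _ _ k'n (good_act _ _ _ _ _ _ _ hdet g)).
    by rewrite Qf_inv.
  move=> hy.
  have [k2 [al2 [de2 [be2 [k2n g2 ey]]]]] := (inPi_V y).1 hy.1.
  subst y; have hQ2 := (inQ_V _ _ _ _ k2n g2).1 hy.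
  have [a1 [b1 [c1 [d1 [l1 [hd1 hl1 l1n [eA1 eD1 eB1]]]]]]] := reachQ _ _ _ g hQ.
  have [a2 [b2 [c2 [d2 [l2 [hd2 hl2 l2n [eA2 eD2 eB2]]]]]]] := reachQ _ _ _ g2 hQ2.
  exact: (orbit_rev w k k2 a1 b1 c1 d1 a2 b2 c2 d2 l1 l2 1 0 0 al de be al2 de2 be2
    kn k2n hd1 hd2 hl1 l1n hl2 l2n eA1 eD1 eB1 eA2 eD2 eB2).
move=> x y [hPi [hnQ hnN]].
have [k [al [de [be [kn g ex]]]]] := (inPi_V x).1 hPi.
subst x.
have hQ : Qf al de be != 0.
  by apply/eqP => e; apply: hnQ; apply/(inQ_V _ _ _ _ kn g).
have hn : ~ (al = 0 /\ be = 0) by move=> h; apply: hnN; apply/(N_V _ _ _ _ kn g).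
split.
  move/(Grel_V _ _ _ _ _ _ kn) => [a [b [c [d [hdet [k' [k'n ->]]]]]]].
  have g' := good_act _ _ _ _ _ _ _ hdet g.
  split; first by apply/inPi_V; exists k', (actA a b c d al de be),
    (actD a b c d al de be), (actB a b c d al de be).
  split.
    by move/(inQ_V _ _ _ _ k'n g'); rewrite Qf_inv //; apply/eqP.
  by move/(N_V _ _ _ _ k'n g') => [eA eB]; apply: hn; exact: (act_notN _ _ _ _ _ _ _ hdet eA eB).
move=> [hPi2 [hnQ2 hnN2]].
have [k2 [al2 [de2 [be2 [k2n g2 ey]]]]] := (inPi_V y).1 hPi2.
subst y.
have hQ2 : Qf al2 de2 be2 != 0.
  by apply/eqP => e; apply: hnQ2; apply/(inQ_V _ _ _ _ k2n g2).
have hn2 : ~ (al2 = 0 /\ be2 = 0) by move=> h; apply: hnN2; apply/(N_V _ _ _ _ k2n g2).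
have [a1 [b1 [c1 [d1 [l1 [hd1 hl1 l1n [eA1 eD1 eB1]]]]]]] := reachR _ _ _ g hQ hn.
have [a2 [b2 [c2 [d2 [l2 [hd2 hl2 l2n [eA2 eD2 eB2]]]]]]] := reachR _ _ _ g2 hQ2 hn2.
exact: (orbit_rev w k k2 a1 b1 c1 d1 a2 b2 c2 d2 l1 l2 1 1 0 al de be al2 de2 be2
  kn k2n hd1 hd2 hl1 l1n hl2 l2n eA1 eD1 eB1 eA2 eD2 eB2).
Qed.

End Work.

Theorem mainTheorem13 (F : finFieldType) (h q : nat) (w : F) :
  (0 < h)%N -> q = (2 ^ h)%N -> #|F| = (q ^ 2)%N ->
  w ^+ q != w -> w + w ^+ q = 1 ->
  (* every point of Pi lies in exactly one of the three sets *)
  (forall x : 'cV[F]_6, inPi q x ->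
     [\/ setN x, setQ q x | setRest q x]
     /\ ~ (setN x /\ setQ q x) /\ ~ (setN x /\ setRest q x)
     /\ ~ (setQ q x /\ setRest q x)) /\
  (* the three sets are nonempty and contained in Pi *)
  inPi q (Npt F) /\ (exists x : 'cV[F]_6, setQ q x) /\ (exists x : 'cV[F]_6, setRest q x) /\
  (* the G-orbit of each of them is exactly that set *)
  (forall x y : 'cV[F]_6, setN x -> (Grel q w x y <-> setN y)) /\
  (forall x y : 'cV[F]_6, setQ q x -> (Grel q w x y <-> setQ q y)) /\
  (forall x y : 'cV[F]_6, setRest q x -> (Grel q w x y <-> setRest q y)).
Proof.
move=> h0 hqdef hc _ _.
have hc2 : #|F| = (2 ^ (h * 2))%N by rewrite hc hqdef expnM.
have pc : (2 \in [pchar F])%N by apply: (card_finPcharP hc2).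
have h2 : 2 = 0 :> F by exact: pcharf0 pc.
have hq : (0 < q)%N by rewrite hqdef expn_gt0.
have hD : forall x y : F, (x + y) ^+ q = x ^+ q + y ^+ q.
  move=> x y; apply: exprDn_pchar.
  by rewrite hqdef pnatX (pnatE _ (isT : prime 2)) pc.
have hK : forall x : F, (x ^+ q) ^+ q = x.
  by move=> x; rewrite -exprM mulnn -hc expf_card.
have hsq : forall x : F, exists y, y ^+ 2 = x.
  move=> x; exists (x ^+ (2 ^ (h * 2).-1)); rewrite -exprM -expnSr prednK.
    by rewrite -hc2 expf_card.
  by rewrite muln_gt0 h0.
exact: (main_sec _ _ h2 hq hD hK hsq w).
Qed.
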